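(* Define real sequences by the Gauss–Legendre iteration: $a_0 = 1$, $b_0 = 1/\sqrt{2}$, $s_0 = \tfrac14$, and for $n \ge 0$ \[ a_{n+1} = \frac{a_n+b_n}{2},\quad b_{n+1} = \sqrt{a_n b_n},\quad c_{n+1} = a_n - a_{n+1},\quad s_{n+1} = s_n - 2^n c_{n+1}^2 . \] Define also sequences by the Borwein iteration: $\alpha_0 = 6-4\sqrt{2}$, $k_0 = 3-2\sqrt{2}$, and for $n\ge 0$ \[ k_n' = \sqrt{1-k_n^2},\quad k_{n+1} = \frac{1-k_n'}{1+k_n'},\quad \alpha_{n+1} = (1+k_{n+1})^2\alpha_n - 2^{n+2}k_{n+1}, \] and set $\widehat{\pi}_n = 1/\alpha_n$. Then for every $n \ge 0$, \[ \widehat{\pi}_n = \frac{a_{n+1}^2}{s_n}. \]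
   Context: All square roots are the positive real square roots; all quantities are computed in exact real arithmetic. *)

(* Defs.v *)
From Stdlib Require Import Reals.
Open Scope R_scope.

Fixpoint gl (n : nat) : R * R * R :=
  match n with
  | O => (1, 1 / sqrt 2, 1 / 4)
  | S m =>
      let '(a, b, s) := gl m in
      let a' := (a + b) / 2 in
      let b' := sqrt (a * b) in
      let c' := a - a' in
      (a', b', s - 2 ^ m * c' ^ 2)
  end.

Definition gl_a (n : nat) : R := fst (fst (gl n)).
Definition gl_b (n : nat) : R := snd (fst (gl n)).
Definition gl_s (n : nat) : R := snd (gl n).

Fixpoint bw (n : nat) : R * R :=
  match n with
  | O => (3 - 2 * sqrt 2, 6 - 4 * sqrt 2)
  | S m =>
      let '(k, al) := bw m in
      let k' := sqrt (1 - k ^ 2) in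
      let knew := (1 - k') / (1 + k') in
      (knew, (1 + knew) ^ 2 * al - 2 ^ (m + 2) * knew)
  end.

Definition bw_k (n : nat) : R := fst (bw n).
Definition bw_alpha (n : nat) : R := snd (bw n).
Definition bw_pihat (n : nat) : R := 1 / bw_alpha n.

(* Main.v *)
Require Import Defs.
From Stdlib Require Import Reals Lra Psatz.
Open Scope R_scope.

Lemma gl_S n : gl_a (S n) = (gl_a n + gl_b n) / 2 /\
  gl_b (S n) = sqrt (gl_a n * gl_b n) /\
  gl_s (S n) = gl_s n - 2 ^ n * (gl_a n - gl_a (S n)) ^ 2.
Proof. unfold gl_a, gl_b, gl_s; simpl; destruct (gl n) as [[a b] s]; simpl; auto. Qed.

Lemma bw_S n : bw_k (S n) = (1 - sqrt (1 - bw_k n ^ 2)) / (1 + sqrt (1 - bw_k n ^ 2)) /\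
  bw_alpha (S n) = (1 + bw_k (S n)) ^ 2 * bw_alpha n - 2 ^ (n + 2) * bw_k (S n).
Proof. unfold bw_k, bw_alpha; simpl; destruct (bw n) as [k al]; simpl; auto. Qed.

Lemma pos n : 0 < gl_a n /\ 0 < gl_b n.
Proof.
  induction n as [|n [Ha Hb]].
  - unfold gl_a, gl_b; simpl. split; [lra|]. 
    assert (0 < sqrt 2) by (apply sqrt_lt_R0; lra).
    apply Rdiv_lt_0_compat; lra.
  - destruct (gl_S n) as [E1 [E2 _]]. rewrite E1, E2. split; [lra|].
    apply sqrt_lt_R0; nra.
Qed.

Lemma inv n : bw_k n = (gl_a n - gl_b n) / (gl_a n + gl_b n) /\
  bw_alpha n = gl_s n / gl_a (S n) ^ 2.
Proof.
  induction n as [|n [Hk Hal]].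
  - destruct (gl_S 0) as [E1 _]. rewrite E1.
    unfold bw_k, bw_alpha, gl_a, gl_b, gl_s; simpl.
    assert (H2 : sqrt 2 * sqrt 2 = 2) by (apply sqrt_sqrt; lra).
    assert (0 < sqrt 2) by (apply sqrt_lt_R0; lra).
    set (r := sqrt 2) in *.
    assert (Q : (1 - 1 / r) / (1 + 1 / r) = 3 - 2 * r).
    { replace ((1 - 1 / r) / (1 + 1 / r)) with ((r - 1) / (r + 1)) by (field; lra).
      replace (r - 1) with ((3 - 2 * r) * (r + 1)) by nra. field. lra. }
    split.
    + rewrite Q; reflexivity.
    + assert (D : forall x y z, y <> 0 -> x = z * y -> x / y = z).
      { intros x y z Hy ->. field. exact Hy. }
      assert (r ^ 2 = 2) by (simpl; lra). assert (r ^ 3 = 2 * r) by (simpl; nra).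
      symmetry. field_simplify; [|lra]. apply D; [nra|]. nra.
  - destruct (pos n) as [Ha Hb].
    destruct (gl_S n) as [E1 [E2 E3]].
    destruct (gl_S (S n)) as [F1 [F2 F3]].
    destruct (bw_S n) as [G1 G2].
    set (a := gl_a n) in *. set (b := gl_b n) in *.
    set (A := gl_a (S n)) in *. set (B := gl_b (S n)) in *.
    assert (HB0 : 0 < B) by (rewrite E2; apply sqrt_lt_R0; nra).
    assert (HBB : B * B = a * b) by (rewrite E2; apply sqrt_sqrt; nra).
    assert (Kp : sqrt (1 - bw_k n ^ 2) = B / A).
    { rewrite Hk. replace (1 - ((a - b) / (a + b)) ^ 2) with ((B / A) ^ 2).
      - apply sqrt_pow2. apply Rlt_le, Rdiv_lt_0_compat; lra.
      - rewrite E1. field_simplify; try lra. replace (B ^ 2) with (a * b) by (rewrite <- HBB; ring). unfold Rdiv; ring. }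
    assert (Hk1 : bw_k (S n) = (A - B) / (A + B)).
    { rewrite G1, Kp. field. split; lra. }
    split; [exact Hk1|].
    rewrite G2, Hk1, Hal, E3, F1.
    fold A. fold B.
    assert (HAB : (A - B) * (A + B) = (a - A) ^ 2).
    { rewrite E1. ring_simplify. rewrite <- E1.
      replace (B ^ 2) with (a * b) by (rewrite <- HBB; ring). rewrite E1. field. }
    rewrite <- HAB. rewrite pow_add. field. split; lra.
Qed.

Theorem theorem1 : forall n : nat, bw_pihat n = gl_a (S n) ^ 2 / gl_s n.
Proof.
  intro n. unfold bw_pihat. destruct (inv n) as [_ H]. rewrite H.
  destruct (pos (S n)) as [Ha _].
  unfold Rdiv. rewrite Rmult_1_l, Rinv_mult, Rinv_inv. ring.
Qed.
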